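(* Assume Non-Degeneracy Assumption I, and let $U,P$ be the optimal solutions constructed from a base sequence and a nonnegative solution of the base-sequence system as in the Structure Theorem part (i) (all boundary values, $\tau_n$, $x^n$, $q^n$ nonnegative). Let $\check U=\int_0^Tu(t)dt=\sum_n\tau_nu^n$ and $\check P=\int_0^Tp(t)dt=\sum_n\tau_np^n$. Then $(\mathbf{u}^0,\mathbf{u}^N)$ is an optimal solution of the LP $$\max\ (\gamma+cT-A^\top\check P)^\top\mathbf{u}^0+\gamma^\top\mathbf{u}^N\ \text{ s.t. } A\mathbf{u}^0\le\beta,\ A\mathbf{u}^0+A\mathbf{u}^N\le\beta+bT-A\check U,\ \mathbf{u}^0,\mathbf{u}^N\ge0,$$ and $(\mathbf{p}^N,\mathbf{p}^0)$ is an optimal solution of its dual LP $$\min\ (\beta+bT-A\check U)^\top\mathbf{p}^N+\beta^\top\mathbf{p}^0\ \text{ s.t. } A^\top\mathbf{p}^N\ge\gamma,\ A^\top\mathbf{p}^N+A^\top\mathbf{p}^0\ge\gamma+cT-A^\top\check P,\ \mathbf{p}^N,\mathbf{p}^0\ge0.$$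
   Context: Let $A$ be a real $K\times J$ matrix, $\beta,b\in\mathbb{R}^K$, $\gamma,c\in\mathbb{R}^J$, $T>0$. M-CLP: maximize $\int_{0-}^T(\gamma+(T-t)c)^\top dU(t)$ over nonnegative, non-decreasing, right-continuous $U:[0,T]\to\mathbb{R}^J$ with $U(0-)=0$, subject to $AU(t)\le\beta+bt$, $0\le t\le T$. M-CLP$^*$: minimize $\int_{0-}^T(\beta+(T-t)b)^\top dP(t)$ over nonnegative, non-decreasing, right-continuous $P:[0,T]\to\mathbb{R}^K$ with $P(0-)=0$, subject to $A^\top P(t)\ge\gamma+ct$. Non-Degeneracy Assumption I: $b$ is not a linear combination of fewer than $K$ columns of $[A\ I]$ and $c$ is not a linear combination of fewer than $J$ columns of $[A^\top\ I]$. Bases: index sets $\mathcal{K}\subseteq\{1..K\},\mathcal{J}\subseteq\{1..J\}$ such that $\dot x_k$ ($k\in\mathcal{K}$), $u_j$ ($j\notin\mathcal{J}$) are $K$ variables with independent columns in $[A\ I]$; primal basic solution solves $Au+\dot x=b$ with $u_j=0$ ($j\in\mathcal{J}$), $\dot x_k=0$ ($k\notin\mathcal{K}$); dual basic solution solves $A^\top p-\dot q=c$ with $p_k=0$ ($k\in\mathcal{K}$), $\dot q_j=0$ ($j\notin\mathcal{J}$). Admissible: $u,p\ge0$. Adjacent: one pivot apart, primal variable $v_n$ leaving from $B_n$ to $B_{n+1}$. A base sequence consists of admissible, consecutively adjacent bases $B_1..B_N$ (index sets $\mathcal{K}_n,\mathcal{J}_n$, rates $u^n,\dot x^n,p^n,\dot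 q^n$) plus index sets $\mathcal{K}_0,\mathcal{J}_0,\mathcal{K}_{N+1},\mathcal{J}_{N+1}$ with $\mathcal{K}_0\subseteq\mathcal{K}_1$, $\mathcal{J}_{N+1}\subseteq\mathcal{J}_N$. The base-sequence system in unknowns $\mathbf{u}^0,\mathbf{u}^N,q^N,\mathbf{q}^0\in\mathbb{R}^J$, $x^0,\mathbf{x}^N,\mathbf{p}^0,\mathbf{p}^N\in\mathbb{R}^K$, $\tau_1..\tau_N$, with $x^n=x^0+\sum_{m\le n}\dot x^m\tau_m$, $q^n=q^N+\sum_{m>n}\dot q^m\tau_m$, is: (a) $x^n_k=0$ if $v_n=\dot x_k$, $q^n_j=0$ if $v_n=u_j$ ($n=1..N-1$); (b) $\sum\tau_n=T$; (c) $\mathbf{u}^0_j=0$ ($j\in\mathcal{J}_0$), $x^0_k=0$ ($k\notin\mathcal{K}_0$), $\mathbf{p}^0_k=0$ ($k\in\mathcal{K}_0$), $\mathbf{q}^0_j=0$ ($j\notin\mathcal{J}_0$), $\mathbf{p}^N_k=0$ ($k\in\mathcal{K}_{N+1}$), $q^N_j=0$ ($j\notin\mathcal{J}_{N+1}$), $\mathbf{u}^N_j=0$ ($j\in\mathcal{J}_{N+1}$), $\mathbf{x}^N_k=0$ ($k\notin\mathcal{K}_{N+1}$); (d) $A\mathbf{u}^0+x^0=\beta$, $A^\top\mathbf{p}^N-q^N=\gamma$; (e) $A\mathbf{u}^N+\mathbf{x}^N-x^N=0$, $A^\top\mathbf{p}^0-\mathbf{q}^0+q^0=0$. Constructed functions: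 $t_n=\sum_{m\le n}\tau_m$, $u(t)=u^n$ on $(t_{n-1},t_n)$, $U(t)=\mathbf{u}^0+\int_0^tu$ ($t<T$), $U(T)=U(T-)+\mathbf{u}^N$; $p(s)=p^n$ on $(T-t_n,T-t_{n-1})$, $P(s)=\mathbf{p}^N+\int_0^sp$ ($s<T$), $P(T)=P(T-)+\mathbf{p}^0$. *)

(* Defs.v *)
From HB Require Import structures.
From mathcomp Require Import all_boot all_order all_algebra.
Set Implicit Arguments. Unset Strict Implicit. Unset Printing Implicit Defensive.
Import Order.TTheory GRing.Theory Num.Theory.
Local Open Scope ring_scope.

Section MCLP.
Variable R : realFieldType.
Variables K J : nat.

Definition lecv (n : nat) (x y : 'cV[R]_n) : Prop := forall i, x i 0 <= y i 0.
Definition dotv (n : nat) (x y : 'cV[R]_n) : R := \sum_i x i 0 * y i 0.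

Definition nondeg_I (A : 'M[R]_(K, J)) (b : 'cV[R]_K) (c : 'cV[R]_J) : Prop :=
  (forall S : {set 'I_(J + K)}, (#|S| < K)%N ->
     ~ exists w : 'cV[R]_(J + K),
         (forall i, i \notin S -> w i 0 = 0) /\ row_mx A (1%:M : 'M[R]_K) *m w = b)
  /\
  (forall S : {set 'I_(K + J)}, (#|S| < J)%N ->
     ~ exists w : 'cV[R]_(K + J),
         (forall i, i \notin S -> w i 0 = 0) /\ row_mx A^T (1%:M : 'M[R]_J) *m w = c).

(* primal variables: inl j = u_j, inr k = xdot_k *)
Definition pvar := ('I_J + 'I_K)%type.

Definition basicvars (Ks : {set 'I_K}) (Js : {set 'I_J}) : {set pvar} :=
  [set v : pvar | match v with inl j => j \notin Js | inr k => k \in Ks end].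

Definition is_base (A : 'M[R]_(K, J)) (Ks : {set 'I_K}) (Js : {set 'I_J}) : Prop :=
  #|basicvars Ks Js| = K /\
  forall (wu : 'cV[R]_J) (wx : 'cV[R]_K),
    (forall j, j \in Js -> wu j 0 = 0) ->
    (forall k, k \notin Ks -> wx k 0 = 0) ->
    A *m wu + wx = 0 -> wu = 0 /\ wx = 0.

Definition primal_basic (A : 'M[R]_(K, J)) (b : 'cV[R]_K)
  (Ks : {set 'I_K}) (Js : {set 'I_J}) (u : 'cV[R]_J) (xd : 'cV[R]_K) : Prop :=
  A *m u + xd = b /\ (forall j, j \in Js -> u j 0 = 0)
  /\ (forall k, k \notin Ks -> xd k 0 = 0).

Definition dual_basic (A : 'M[R]_(K, J)) (c : 'cV[R]_J)
  (Ks : {set 'I_K}) (Js : {set 'I_J}) (p : 'cV[R]_K) (qd : 'cV[R]_J) : Prop :=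
  A^T *m p - qd = c /\ (forall k, k \in Ks -> p k 0 = 0)
  /\ (forall j, j \notin Js -> qd j 0 = 0).

Definition admissible_base (A : 'M[R]_(K, J)) (b : 'cV[R]_K) (c : 'cV[R]_J)
  (Ks : {set 'I_K}) (Js : {set 'I_J})
  (u : 'cV[R]_J) (xd : 'cV[R]_K) (p : 'cV[R]_K) (qd : 'cV[R]_J) : Prop :=
  is_base A Ks Js /\ primal_basic A b Ks Js u xd /\ dual_basic A c Ks Js p qd
  /\ lecv 0 u /\ lecv 0 p.

Definition adjacent (Ks1 : {set 'I_K}) (Js1 : {set 'I_J})
  (Ks2 : {set 'I_K}) (Js2 : {set 'I_J}) (v : pvar) : Prop :=
  v \in basicvars Ks1 Js1 /\ v \notin basicvars Ks2 Js2 /\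
  #|basicvars Ks1 Js1 :\: basicvars Ks2 Js2| = 1%N.

(* base sequence B_1..B_N (indices 1..N), with extra index sets at 0 and N+1 *)
Definition base_sequence (A : 'M[R]_(K, J)) (b : 'cV[R]_K) (c : 'cV[R]_J)
  (N : nat) (Ks : nat -> {set 'I_K}) (Js : nat -> {set 'I_J})
  (u : nat -> 'cV[R]_J) (xd : nat -> 'cV[R]_K)
  (p : nat -> 'cV[R]_K) (qd : nat -> 'cV[R]_J) (v : nat -> pvar) : Prop :=
  (0 < N)%N /\
  (forall n, (1 <= n <= N)%N -> admissible_base A b c (Ks n) (Js n) (u n) (xd n) (p n) (qd n)) /\
  (forall n, (1 <= n < N)%N -> adjacent (Ks n) (Js n) (Ks n.+1) (Js n.+1) (v n)) /\
  Ks 0%N \subset Ks 1%N /\ Js N.+1 \subset Js N.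

Definition xcurve (x0 : 'cV[R]_K) (xd : nat -> 'cV[R]_K) (tau : nat -> R) (n : nat)
  : 'cV[R]_K := x0 + \sum_(1 <= m < n.+1) tau m *: xd m.
Definition qcurve (N : nat) (qN : 'cV[R]_J) (qd : nat -> 'cV[R]_J) (tau : nat -> R)
  (n : nat) : 'cV[R]_J := qN + \sum_(n.+1 <= m < N.+1) tau m *: qd m.

(* the base-sequence system (a)-(e); bold boundary values are u0 uN q0 pN p0 xN,
   and x0 = x^0, qN = q^N *)
Definition base_seq_system (A : 'M[R]_(K, J)) (beta : 'cV[R]_K) (gamma : 'cV[R]_J)
  (T : R) (N : nat) (Ks : nat -> {set 'I_K}) (Js : nat -> {set 'I_J})
  (xd : nat -> 'cV[R]_K) (qd : nat -> 'cV[R]_J) (v : nat -> pvar)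
  (u0 uN qN q0 : 'cV[R]_J) (x0 xN p0 pN : 'cV[R]_K) (tau : nat -> R) : Prop :=
  (* (a) *)
  (forall n, (1 <= n < N)%N ->
     (forall k, v n = inr k -> xcurve x0 xd tau n k 0 = 0) /\
     (forall j, v n = inl j -> qcurve N qN qd tau n j 0 = 0)) /\
  (* (b) *)
  \sum_(1 <= n < N.+1) tau n = T /\
  (* (c) *)
  (forall j, j \in Js 0%N -> u0 j 0 = 0) /\
  (forall k, k \notin Ks 0%N -> x0 k 0 = 0) /\
  (forall k, k \in Ks 0%N -> p0 k 0 = 0) /\
  (forall j, j \notin Js 0%N -> q0 j 0 = 0) /\
  (forall k, k \in Ks N.+1 -> pN k 0 = 0) /\
  (forall j, j \notin Js N.+1 -> qN j 0 = 0) /\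
  (forall j, j \in Js N.+1 -> uN j 0 = 0) /\
  (forall k, k \notin Ks N.+1 -> xN k 0 = 0) /\
  (* (d) *)
  A *m u0 + x0 = beta /\ A^T *m pN - qN = gamma /\
  (* (e) *)
  A *m uN + xN - xcurve x0 xd tau N = 0 /\
  A^T *m p0 - q0 + qcurve N qN qd tau 0%N = 0.

Definition system_nonneg (N : nat) (xd : nat -> 'cV[R]_K) (qd : nat -> 'cV[R]_J)
  (u0 uN qN q0 : 'cV[R]_J) (x0 xN p0 pN : 'cV[R]_K) (tau : nat -> R) : Prop :=
  lecv 0 u0 /\ lecv 0 uN /\ lecv 0 qN /\ lecv 0 q0 /\
  lecv 0 x0 /\ lecv 0 xN /\ lecv 0 p0 /\ lecv 0 pN /\
  (forall n, (1 <= n <= N)%N -> 0 <= tau n) /\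
  (forall n, (n <= N)%N -> lecv 0 (xcurve x0 xd tau n) /\ lecv 0 (qcurve N qN qd tau n)).

Definition blp_feasible (A : 'M[R]_(K, J)) (beta r : 'cV[R]_K) (u0 uN : 'cV[R]_J) : Prop :=
  lecv (A *m u0) beta /\ lecv (A *m u0 + A *m uN) r /\ lecv 0 u0 /\ lecv 0 uN.
Definition blp_optimal (A : 'M[R]_(K, J)) (beta r : 'cV[R]_K) (f g : 'cV[R]_J)
  (u0 uN : 'cV[R]_J) : Prop :=
  blp_feasible A beta r u0 uN /\
  forall u0' uN', blp_feasible A beta r u0' uN' ->
    dotv f u0' + dotv g uN' <= dotv f u0 + dotv g uN.

Definition bdlp_feasible (A : 'M[R]_(K, J)) (gamma s : 'cV[R]_J) (pN p0 : 'cV[R]_K) : Prop :=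
  lecv gamma (A^T *m pN) /\ lecv s (A^T *m pN + A^T *m p0) /\ lecv 0 pN /\ lecv 0 p0.
Definition bdlp_optimal (A : 'M[R]_(K, J)) (gamma s : 'cV[R]_J) (h e : 'cV[R]_K)
  (pN p0 : 'cV[R]_K) : Prop :=
  bdlp_feasible A gamma s pN p0 /\
  forall pN' p0', bdlp_feasible A gamma s pN' p0' ->
    dotv h pN + dotv e p0 <= dotv h pN' + dotv e p0'.

End MCLP.

(* Main.v *)
Require Import Defs.
From HB Require Import structures.
From mathcomp Require Import all_boot all_order all_algebra.
From mathcomp Require Import ring lra.
Set Implicit Arguments. Unset Strict Implicit. Unset Printing Implicit Defensive.
Import Order.TTheory GRing.Theory Num.Theory.
Local Open Scope ring_scope.

Section H.
Variable R : realFieldType.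

Lemma dotvE n (x y : 'cV[R]_n) : dotv x y = (x^T *m y) 0 0.
Proof. by rewrite /dotv mxE; apply: eq_bigr => i _; rewrite mxE. Qed.

Lemma dotv_mul m n (M : 'M[R]_(m, n)) x y : dotv x (M *m y) = dotv (M^T *m x) y.
Proof. by rewrite !dotvE trmx_mul trmxK mulmxA. Qed.

Lemma dotvDl n (x y z : 'cV[R]_n) : dotv (x + y) z = dotv x z + dotv y z.
Proof. by rewrite /dotv -big_split; apply: eq_bigr => i _; rewrite mxE mulrDl. Qed.

Lemma dotvBl n (x y z : 'cV[R]_n) : dotv (x - y) z = dotv x z - dotv y z.
Proof. by rewrite /dotv -sumrB; apply: eq_bigr => i _; rewrite !mxE mulrBl. Qed.

Lemma dotvC n (x y : 'cV[R]_n) : dotv x y = dotv y x.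
Proof. by apply: eq_bigr => i _; rewrite mulrC. Qed.

Lemma dotv_le n (x y z : 'cV[R]_n) : lecv 0 z -> lecv x y -> dotv x z <= dotv y z.
Proof.
move=> hz hxy; apply: ler_sum => i _; apply: ler_wpM2r; last exact: hxy.
by have := hz i; rewrite mxE.
Qed.

Lemma dotv0 n (x y : 'cV[R]_n) : (forall i, x i 0 = 0 \/ y i 0 = 0) -> dotv x y = 0.
Proof. by move=> h; apply: big1 => i _; case: (h i) => ->; rewrite ?mul0r ?mulr0. Qed.

Lemma weak_dual K J (A : 'M[R]_(K, J)) beta r gamma s u0 uN pN p0 :
  blp_feasible A beta r u0 uN -> bdlp_feasible A gamma s pN p0 ->
  dotv s u0 + dotv gamma uN <= dotv r pN + dotv beta p0.
Proof.
move=> [h1 [h2 [h3 h4]]] [g1 [g2 [g3 g4]]].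
apply: (@le_trans _ _ (dotv (A^T *m pN + A^T *m p0) u0 + dotv (A^T *m pN) uN)).
  by apply: lerD; apply: dotv_le.
have -> : dotv (A^T *m pN + A^T *m p0) u0 + dotv (A^T *m pN) uN
   = dotv (A *m u0 + A *m uN) pN + dotv (A *m u0) p0.
  rewrite !dotvDl -!dotv_mul !(dotvC (A *m _)) !dotv_mul.
  ring.
by apply: lerD; apply: dotv_le.
Qed.
End H.

Theorem mainTheorem3 (R : realFieldType) (K J : nat) (A : 'M[R]_(K, J))
  (beta b : 'cV[R]_K) (gamma c : 'cV[R]_J) (T : R) (N : nat)
  (Ks : nat -> {set 'I_K}) (Js : nat -> {set 'I_J})
  (u : nat -> 'cV[R]_J) (xd : nat -> 'cV[R]_K)
  (p : nat -> 'cV[R]_K) (qd : nat -> 'cV[R]_J) (v : nat -> pvar K J)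
  (tau : nat -> R)
  (u0 uN qN q0 : 'cV[R]_J) (x0 xN p0 pN : 'cV[R]_K) :
  0 < T ->
  nondeg_I A b c ->
  base_sequence A b c N Ks Js u xd p qd v ->
  base_seq_system A beta gamma T N Ks Js xd qd v u0 uN qN q0 x0 xN p0 pN tau ->
  system_nonneg N xd qd u0 uN qN q0 x0 xN p0 pN tau ->
  let Uc := \sum_(1 <= n < N.+1) tau n *: u n in
  let Pc := \sum_(1 <= n < N.+1) tau n *: p n in
  blp_optimal A beta (beta + T *: b - A *m Uc) (gamma + T *: c - A^T *m Pc) gamma u0 uN /\
  bdlp_optimal A gamma (gamma + T *: c - A^T *m Pc) (beta + T *: b - A *m Uc) beta pN p0.
Proof.
move=> _ _ [hN [hadm _]] [_ [hT [c1 [c2 [c3 [c4 [c5 [c6 [c7 [c8 [d1 [d2 [e1 e2]]]]]]]]]]]]]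
  [n1 [n2 [n3 [n4 [n5 [n6 [n7 [n8 _]]]]]]]] Uc Pc.
have hxd : forall n, (1 <= n <= N)%N -> xd n = b - A *m u n.
  move=> n hn; have [_ [[pb _] _]] := hadm n hn.
  by rewrite -pb addrAC subrr add0r.
have hqd : forall n, (1 <= n <= N)%N -> qd n = A^T *m p n - c.
  move=> n hn; have [_ [_ [[db _] _]]] := hadm n hn.
  by rewrite -db subKr.
have hsx : \sum_(1 <= m < N.+1) tau m *: xd m = T *: b - A *m Uc.
  transitivity (\sum_(1 <= m < N.+1) (tau m *: b - A *m (tau m *: u m))).
    apply: eq_big_nat => m hm; rewrite hxd; last by rewrite -ltnS.
    by rewrite scalerBr scalemxAr.
  by rewrite /Uc mulmx_sumr sumrB -scaler_suml hT.
have hsq : \sum_(1 <= m < N.+1) tau m *: qd m = A^T *m Pc - T *: c.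
  transitivity (\sum_(1 <= m < N.+1) (A^T *m (tau m *: p m) - tau m *: c)).
    apply: eq_big_nat => m hm; rewrite hqd; last by rewrite -ltnS.
    by rewrite scalerBr scalemxAr.
  by rewrite /Pc mulmx_sumr sumrB -scaler_suml hT.
have hr : beta + T *: b - A *m Uc = A *m u0 + A *m uN + xN.
  have xc : A *m uN + xN = xcurve x0 xd tau N by move/subr0_eq: e1.
  by rewrite -addrA -hsx -d1 -[A *m u0 + A *m uN + xN]addrA xc /xcurve addrA.
have hs : gamma + T *: c - A^T *m Pc = A^T *m pN + A^T *m p0 - q0.
  have -> : gamma + T *: c - A^T *m Pc = gamma - \sum_(1 <= m < N.+1) tau m *: qd m.
    by rewrite hsq opprB addrA.
  rewrite -d2 -addrA -opprD.
  move/eqP: e2; rewrite /qcurve addrC addr_eq0 -addrA => /eqP ->.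
  by rewrite addrC.
have pf : blp_feasible A beta (beta + T *: b - A *m Uc) u0 uN.
  split; [|split; [|by split]].
    by move=> i; rewrite -d1 [X in _ <= X]mxE lerDl; have := n5 i; rewrite mxE.
  by rewrite hr => i; rewrite [X in _ <= X]mxE lerDl; have := n6 i; rewrite mxE.
have df : bdlp_feasible A gamma (gamma + T *: c - A^T *m Pc) pN p0.
  split; [|split; [|by split]].
    by move=> i; rewrite -d2 !mxE; have := n3 i; rewrite mxE; lra.
  rewrite hs => i; rewrite !mxE; have := n4 i; rewrite mxE; lra.
have hobj : dotv (gamma + T *: c - A^T *m Pc) u0 + dotv gamma uN
          = dotv (beta + T *: b - A *m Uc) pN + dotv beta p0.
  have z1 : dotv q0 u0 = 0.
    by apply: dotv0 => i; case: (boolP (i \in Js 0%N)) => h; [right; exact: c1|left; exact: c4].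
  have z2 : dotv qN uN = 0.
    by apply: dotv0 => i; case: (boolP (i \in Js N.+1)) => h; [right; exact: c7|left; exact: c6].
  have z3 : dotv xN pN = 0.
    by apply: dotv0 => i; case: (boolP (i \in Ks N.+1)) => h; [right; exact: c5|left; exact: c8].
  have z4 : dotv x0 p0 = 0.
    by apply: dotv0 => i; case: (boolP (i \in Ks 0%N)) => h; [right; exact: c3|left; exact: c2].
  rewrite hs hr -d1 -d2 !dotvBl !dotvDl z1 z2 z3 z4.
  rewrite !(dotvC (A *m _)) !dotv_mul.
  ring.
split; split => //.
  move=> u0' uN' hf; rewrite hobj; exact: weak_dual hf df.
move=> pN' p0' hf; rewrite -hobj; exact: weak_dual pf hf.
Qed.
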